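(* Let $P$ be a Poisson tensor on $\mathbb{R}^3$, let $H\in C^\infty(\mathbb{R}^3)$, let $S\in C^\infty(\mathbb{R}^3)$ satisfy $PdS=0$, and let $g$ be the symmetric tensor with components $g^{ij}=H^iH^j-\delta^{ij}\sum_k H^kH^k$. Let $x(t)$ be a solution of $\dot{x}=PdH+gdS$ with $x(0)=x_0$. If $d_{x_0}S=0$, then $d_{x(t)}S=0$ for all times $t$.
   Context: $\mathbb{R}^3$ carries the standard Euclidean metric, used to identify tangent and cotangent spaces with $\mathbb{R}^3$; $H^i=H_i=\partial H/\partial x^i$. A Poisson tensor is a skew-symmetric bivector field satisfying the Jacobi identity. *)

(* Defs.v *)
From HB Require Import structures.
From mathcomp Require Import all_boot all_order all_algebra.
From mathcomp Require Import all_classical all_reals all_analysis.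
Set Implicit Arguments. Unset Strict Implicit. Unset Printing Implicit Defensive.
Import Order.TTheory GRing.Theory Num.Theory.
Import numFieldNormedType.Exports.
Local Open Scope classical_set_scope.
Local Open Scope ring_scope.

Section Defs.
Variable R : realType.
Notation V := 'rV[R]_3.

Definition evec (i : 'I_3) : V := delta_mx 0 i.

Definition partial (i : 'I_3) (f : V -> R) : V -> R :=
  fun x => 'D_(evec i) f x.

Fixpoint iter_partial (l : seq 'I_3) (f : V -> R) : V -> R :=
  if l is i :: l' then partial i (iter_partial l' f) else f.

Definition smooth (f : V -> R) : Prop :=
  forall (l : seq 'I_3) (x : V), differentiable (iter_partial l f) x.

(* differential (gradient, via the Euclidean metric) dF = (F_1, F_2, F_3) *)
Definition grad (f : V -> R) (x : V) : V := \row_i partial i f x.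

Definition poisson_tensor (P : V -> 'M[R]_3) : Prop :=
  [/\ forall i j, smooth (fun x => P x i j),
      forall x i j, P x j i = - P x i j &
      forall x i j k,
        \sum_(l < 3) (P x i l * partial l (fun y => P y j k) x
                    + P x j l * partial l (fun y => P y k i) x
                    + P x k l * partial l (fun y => P y i j) x) = 0].

Definition tensor_apply (T : 'M[R]_3) (v : V) : V :=
  \row_i \sum_(j < 3) T i j * v 0 j.

Definition gtensor (H : V -> R) (x : V) : 'M[R]_3 :=
  \matrix_(i, j) (grad H x 0 i * grad H x 0 j
                  - (i == j)%:R * \sum_(k < 3) grad H x 0 k ^+ 2).

Definition metriplectic_field (P : V -> 'M[R]_3) (H S : V -> R) (x : V) : V :=
  tensor_apply (P x) (grad H x) + tensor_apply (gtensor H x) (grad S x).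

End Defs.

(* Main.v *)
Require Import Defs.
From HB Require Import structures.
From mathcomp Require Import all_boot all_order all_algebra.
From mathcomp Require Import all_classical all_reals all_analysis.
From mathcomp Require Import ring lra.
Import Order.TTheory GRing.Theory Num.Theory.
Import numFieldNormedType.Exports.
Local Open Scope classical_set_scope.
Local Open Scope ring_scope.

Section Helpers.
Variable R : realType.
Notation V := 'rV[R]_3.

Lemma chain (G : V -> R) (c : R -> V) (t : R) (v : V) :
  is_derive t 1 c v -> differentiable G (c t) ->
  is_derive t 1 (G \o c) ('d G (c t) v).
Proof.
move=> [dc <-] dG.
have dc' : differentiable c t by apply/derivable1_diffP.
have dGc : differentiable (G \o c) t by exact: differentiable_comp.
apply: DeriveDef; first by apply/derivable1_diffP.
rewrite (deriveE _ dGc) (diff_comp dc' dG) /=.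
by rewrite [in RHS]deriveE.
Qed.

Lemma line_is_derive (p v : V) (t : R) : is_derive t 1 (fun s : R => s *: v + p) v.
Proof.
have L : (fun h : R => h^-1 *: (((fun s : R => s *: v + p) \o shift t) (h *: 1) - (t *: v + p))) @ 0^' --> v.
  apply: cvg_near_cst; near=> h.
  have hne : h != 0 by near: h; exact: nbhs_dnbhs_neq.
  rewrite /= [h%:A]mulr1 scalerDl opprD addrACA addrK subrr addr0.
  by rewrite scalerA mulVf // scale1r.
apply: DeriveDef; first by apply/cvgP: L.
exact: cvg_lim L.
Unshelve. all: by end_near.
Qed.

Lemma line_derive (f : V -> R) (p v : V) (t : R) :
  differentiable f (t *: v + p) ->
  is_derive t 1 (fun s : R => f (s *: v + p)) ('D_v f (t *: v + p)).
Proof.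
move=> df.
have H := @chain f (fun s : R => s *: v + p) t v (line_is_derive p v t) df.
by rewrite (deriveE _ df).
Qed.

Lemma diff_coord (G : V -> R) p (v : V) : differentiable G p ->
  'd G p v = \sum_(j < 3) v 0 j * partial j G p.
Proof.
move=> dG.
have Hv : v = \sum_(j < 3) v 0 j *: evec R j.
  apply/rowP => k; rewrite summxE /evec (bigD1 k) //= big1.
    by rewrite !mxE !eqxx mulr1 addr0.
  by move=> j /negbTE jk; rewrite !mxE eq_sym jk mulr0.
rewrite {1}Hv linear_sum; apply: eq_bigr => j _.
by rewrite linearZ /partial deriveE.
Qed.


Lemma norm_evec (i : 'I_3) : `|evec R i| <= 1.
Proof.
rewrite [leLHS]/Num.Def.normr/= mx_normrE (bigmax_le _ ler01)//= => -[a b] _.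
by rewrite /evec mxE normr_nat; case: (_ && _); rewrite ?ler01 ?lexx.
Qed.

Definition Dm (f : V -> R) (i j : 'I_3) (p : V) (h : R) :=
  f (h *: evec R i + (h *: evec R j + p)) - f (h *: evec R i + p)
  - f (h *: evec R j + p) + f p.

Lemma Dm_sym f i j p h : Dm f i j p h = Dm f j i p h.
Proof.
have E : h *: evec R i + (h *: evec R j + p) = h *: evec R j + (h *: evec R i + p)
  by rewrite addrCA.
rewrite /Dm E; ring.
Qed.


Lemma Dm_mvt f i j p h : (forall y, differentiable f y) ->
  (forall y, differentiable (partial i f) y) -> 0 < h ->
  exists a b, [/\ 0 < a < h, 0 < b < h &
    Dm f i j p h = h * h * partial j (partial i f) (b *: evec R j + (a *: evec R i + p))].
Proof.
move=> df dfi hpos.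
pose phi : R -> R := (fun s : R => f (s *: evec R i + (h *: evec R j + p))) - (fun s : R => f (s *: evec R i + p)).
have dphi : forall s : R, is_derive s 1 phi
    (partial i f (s *: evec R i + (h *: evec R j + p)) - partial i f (s *: evec R i + p)).
  by move=> s; apply: is_deriveB; apply: line_derive.
have cphi : {within `[0, h], continuous phi}.
  by apply: derivable_within_continuous => s _; have [] := dphi s.
have [a ain Ea] := MVT hpos (fun s _ => dphi s) cphi.
pose psi := fun r : R => partial i f (r *: evec R j + (a *: evec R i + p)).
have dpsi : forall r : R, is_derive r 1 psi (partial j (partial i f) (r *: evec R j + (a *: evec R i + p))).
  by move=> r; apply: line_derive.
have cpsi : {within `[0, h], continuous psi}.
  by apply: derivable_within_continuous => r _; have [] := dpsi r.
have [b bin Eb] := MVT hpos (fun r _ => dpsi r) cpsi.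
exists a, b; split; [by move: ain; rewrite in_itv | by move: bin; rewrite in_itv |].
have Ea' : (f (h *: evec R i + (h *: evec R j + p)) - f (h *: evec R i + p))
   - (f (0 *: evec R i + (h *: evec R j + p)) - f (0 *: evec R i + p)) =
   (partial i f (a *: evec R i + (h *: evec R j + p)) - partial i f (a *: evec R i + p)) * (h - 0) := Ea.
have Eb' : partial i f (h *: evec R j + (a *: evec R i + p)) - partial i f (0 *: evec R j + (a *: evec R i + p))
   = partial j (partial i f) (b *: evec R j + (a *: evec R i + p)) * (h - 0) := Eb.
move: Ea' Eb'; rewrite !scale0r !add0r subr0.
have -> : a *: evec R i + (h *: evec R j + p) = h *: evec R j + (a *: evec R i + p) by rewrite addrCA.
move=> Ea2 Eb2; rewrite /Dm.
have -> : f (h *: evec R i + (h *: evec R j + p)) - f (h *: evec R i + p) - f (h *: evec R j + p) + f p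
  = (f (h *: evec R i + (h *: evec R j + p)) - f (h *: evec R i + p)) - (f (h *: evec R j + p) - f p) by ring.
rewrite Ea2 Eb2; ring.
Qed.


Lemma near_pt i j (p : V) (a b : R) : 0 < a -> 0 < b ->
  `|p - (b *: evec R j + (a *: evec R i + p))| <= a + b.
Proof.
move=> a0 b0.
have -> : p - (b *: evec R j + (a *: evec R i + p)) = - (b *: evec R j + a *: evec R i).
  by rewrite addrA opprD addrCA subrr addr0.
rewrite normrN (le_trans (ler_normD _ _)) // addrC.
by rewrite lerD // normrZ gtr0_norm //; apply: ler_piMr; (exact: ltW || exact: norm_evec).
Qed.

Lemma sum_lt {a b h del : R} : a < h -> b < h -> 4 * h = del -> 0 < h -> a + b < del.
Proof. move=> *; lra. Qed.

Lemma fin_lt {d x y : R} : 0 < d -> x < d / 3 -> y < d / 3 -> d <= x + y -> False.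
Proof. move=> *; lra. Qed.

Lemma fin_arg {x1 y1 x2 y2 d : R} : 0 < d -> `|x1 - y1| < d / 3 -> `|x2 - y2| < d / 3 ->
  y1 = y2 -> `|x1 - x2| = d -> False.
Proof.
move=> dpos A1 A2 E D.
have : `|x1 - x2| <= `|x1 - y1| + `|x2 - y2|.
  rewrite [X in _ <= _ + X]distrC (le_trans _ (ler_normD _ _)) //.
  by rewrite E addrA subrK.
rewrite D => H; lra.
Qed.

Lemma schwarz (f : V -> R) (i j : 'I_3) (p : V) :
  (forall y, differentiable f y) ->
  (forall y, differentiable (partial i f) y) ->
  (forall y, differentiable (partial j f) y) ->
  {for p, continuous (partial j (partial i f))} ->
  {for p, continuous (partial i (partial j f))} ->
  partial j (partial i f) p = partial i (partial j f) p.
Proof.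
move=> df dfi dfj c1 c2.
apply/eqP; rewrite -subr_eq0 -normr_eq0; apply/negPn/negP => ne.
set d := `|_ - _| in ne.
have dpos : 0 < d by rewrite lt_def ne normr_ge0.
have epos : 0 < d / 3 by apply: divr_gt0.
move/cvgrPdist_lt: c1 => /(_ _ epos) c1.
move/cvgrPdist_lt: c2 => /(_ _ epos) c2.
have N0 := @filterS2 _ _ _ _ _ _ (fun (q : V) (a : `|partial j (partial i f) p - partial j (partial i f) q| < d / 3)
   (b : `|partial i (partial j f) p - partial i (partial j f) q| < d / 3) => conj a b) c1 c2.
have N := N0 ltac:(typeclasses eauto).
have [del delpos Hdel] := (nbhs_ballP _ _).1 N.
have T : forall q : V, `|p - q| < del -> `|partial j (partial i f) p - partial j (partial i f) q| < d / 3
   /\ `|partial i (partial j f) p - partial i (partial j f) q| < d / 3.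
  by move=> q pq; apply: Hdel; rewrite -ball_normE.

have [h hpos hdel] : exists2 h : R, 0 < h & 4 * h = del.
  have delpos' : 0 < del := delpos.
  by exists (del / 4); lra.
have [a [b [/andP[a0 ah] /andP[b0 bh] E1]]] := Dm_mvt f i j p h df dfi hpos.
have [a' [b' [/andP[a0' ah'] /andP[b0' bh'] E2]]] := Dm_mvt f j i p h df dfj hpos.
rewrite Dm_sym E1 in E2.
have hh : h * h != 0 by apply: mulf_neq0; apply: lt0r_neq0.
have Eq := mulfI hh E2.
have P1 : `|p - (b *: evec R j + (a *: evec R i + p))| < del.
  exact: (le_lt_trans (near_pt i j p a b a0 b0) (sum_lt ah bh hdel hpos)).
have [A1 _] := T _ P1.
have P2 : `|p - (b' *: evec R i + (a' *: evec R j + p))| < del.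
  exact: (le_lt_trans (near_pt j i p a' b' a0' b0') (sum_lt ah' bh' hdel hpos)).
have [_ A2] := T _ P2.
exact: (fin_arg dpos A1 A2 Eq erefl).
Qed.


Lemma alg (Pm : 'I_3 -> 'I_3 -> R) (Hv Sv : 'I_3 -> R) (G Q : 'I_3 -> 'I_3 -> R)
  (D E : 'I_3 -> R) :
  (forall i j, Pm j i = - Pm i j) ->
  (forall j, D j = E j) ->
  (forall i, \sum_(j < 3) (Pm i j * E j + Sv j * Q i j) = 0) ->
  \sum_(j < 3) ((\sum_(i < 3) Pm j i * Hv i) + \sum_(m < 3) G j m * Sv m) * D j
   = \sum_(m < 3) ((\sum_(i < 3) Hv i * Q i m) + \sum_(j < 3) G j m * D j) * Sv m.
Proof.
move=> skew DE idt.
under eq_bigr do rewrite mulrDl.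
rewrite big_split /=.
under [RHS]eq_bigr do rewrite mulrDl.
rewrite [RHS]big_split /=.
congr (_ + _).
- have L : \sum_(j < 3) (\sum_(i < 3) Pm j i * Hv i) * D j
         = \sum_(i < 3) Hv i * \sum_(j < 3) Sv j * Q i j.
    under eq_bigr do rewrite mulr_suml.
    rewrite exchange_big /=; apply: eq_bigr => i _.
    have Ii := idt i; rewrite big_split /= in Ii.
    have -> : \sum_(j < 3) Sv j * Q i j = - \sum_(j < 3) Pm i j * E j.
      by apply/eqP; rewrite -addr_eq0 addrC Ii.
    rewrite mulrN mulr_sumr -sumrN; apply: eq_bigr => j _.
    by rewrite skew DE; ring.
  rewrite L; under [RHS]eq_bigr do rewrite mulr_suml.
  rewrite [RHS]exchange_big /=; apply: eq_bigr => i _.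
  by rewrite mulr_sumr; apply: eq_bigr => j _; ring.
- under eq_bigr do rewrite mulr_suml.
  under [RHS]eq_bigr do rewrite mulr_suml.
  rewrite exchange_big /=; apply: eq_bigr => m _; apply: eq_bigr => j _; ring.
Qed.

Lemma is_derive_exp_lin (c t : R) :
  is_derive t 1 (fun s : R => expR (c * s)) (expR (c * t) * c).
Proof.
have h1 : is_derive t 1 (fun s : R => c * s) c.
  by apply: is_derive_eq; rewrite [_%:A]mulr1.
exact: (is_derive1_comp (is_derive_expR (c * t)) h1).
Qed.

Lemma mono_le (v dv : R -> R) (a b : R) : a <= b ->
  (forall t, a <= t <= b -> is_derive t 1 v (dv t)) ->
  (forall t, a < t < b -> dv t <= 0) -> v b <= v a.
Proof.
move=> ab hd hneg.
have [->|ne] := eqVneq a b; first exact: lexx.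
have ltab : a < b by rewrite lt_neqAle ne ab.
have cv : {within `[a, b], continuous v}.
  apply: derivable_within_continuous => s; rewrite in_itv /= => sab.
  by have [] := hd s sab.
have hd' : forall s, s \in `]a, b[ -> is_derive s 1 v (dv s).
  move=> s; rewrite in_itv /= => /andP[h1 h2]; apply: hd.
  by rewrite !ltW.
have [c cin Ec] := MVT ltab hd' cv.
have : dv c * (b - a) <= 0.
  rewrite mulr_le0_ge0 //; last by rewrite subr_ge0.
  by apply: hneg; move: cin; rewrite in_itv.
rewrite -Ec subr_le0 //.
Qed.


Lemma gron (u du : R -> R) (K a b : R) : a <= b ->
  (forall t, a <= t <= b -> is_derive t 1 u (du t)) ->
  (forall t, a <= t <= b -> `|du t| <= K * u t) ->
  (forall t, a <= t <= b -> 0 <= u t) -> (u a = 0 -> u b = 0) /\ (u b = 0 -> u a = 0).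
Proof.
move=> ab hd hb hpos.
have aa : a <= a <= b by rewrite lexx ab.
have bb : a <= b <= b by rewrite lexx ab.
split => u0.
- pose v := u * (fun s : R => expR (- K * s)).
  have hv : forall t, a <= t <= b -> is_derive t 1 v
      (u t * (expR (- K * t) * - K) + expR (- K * t) * du t).
    move=> t tab; rewrite /v.
    by apply: is_deriveM; [exact: hd | exact: is_derive_exp_lin].
  have := @mono_le v _ a b ab hv.
  have neg : forall t, a < t < b -> u t * (expR (- K * t) * - K) + expR (- K * t) * du t <= 0.
    move=> t /andP[t1 t2].
    have tab : a <= t <= b by rewrite !ltW.
    have e0 := expR_gt0 (- K * t).
    have := hb t tab; have := ler_norm (du t); nra.
  move=> /(_ neg) H.
  have H' : u b * expR (- K * b) <= u a * expR (- K * a) := H.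
  rewrite u0 mul0r in H'.
  have e0 := expR_gt0 (- K * b).
  have := hpos b bb; nra.
- pose v := - (u * (fun s : R => expR (K * s))).
  have hv : forall t, a <= t <= b -> is_derive t 1 v
      (- (u t * (expR (K * t) * K) + expR (K * t) * du t)).
    move=> t tab; rewrite /v.
    by apply: is_deriveN; apply: is_deriveM; [exact: hd | exact: is_derive_exp_lin].
  have := @mono_le v _ a b ab hv.
  have neg : forall t, a < t < b -> - (u t * (expR (K * t) * K) + expR (K * t) * du t) <= 0.
    move=> t /andP[t1 t2].
    have tab : a <= t <= b by rewrite !ltW.
    have e0 := expR_gt0 (K * t).
    have := hb t tab; have := ler_norm (- du t); rewrite normrN; nra.
  move=> /(_ neg) H.
  have H' : - (u b * expR (K * b)) <= - (u a * expR (K * a)) := H.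
  rewrite u0 mul0r oppr0 in H'.
  have e0 := expR_gt0 (K * a).
  have := hpos a aa; nra.
Qed.



Lemma dfD (f g : V -> R) : (forall z, differentiable f z) -> (forall z, differentiable g z) ->
  forall z, differentiable (fun y => f y + g y) z.
Proof. by move=> df dg z; exact: (differentiableD (df z) (dg z)). Qed.

Lemma dfM (f g : V -> R) : (forall z, differentiable f z) -> (forall z, differentiable g z) ->
  forall z, differentiable (fun y => f y * g y) z.
Proof. by move=> df dg z; exact: (differentiableM (df z) (dg z)). Qed.

Lemma dfN (f : V -> R) : (forall z, differentiable f z) ->
  forall z, differentiable (fun y => - f y) z.
Proof. by move=> df z; exact: (differentiableN (df z)). Qed.

Lemma dfC (c : R) : forall z : V, differentiable (fun _ : V => c) z.
Proof. by move=> z; exact: differentiable_cst. Qed.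

Lemma dfS (F : 'I_3 -> V -> R) : (forall i z, differentiable (F i) z) ->
  forall z, differentiable (fun y => \sum_(i < 3) F i y) z.
Proof.
move=> dF z; rewrite -fct_sumE; exact: differentiable_sum.
Qed.

Lemma abs_le_sq1 (b : R) : `|b| <= b * b + 1.
Proof.
have [h|h] := lerP `|b| 1.
  have := sqr_ge0 b; rewrite expr2 => hb; lra.
have : `|b| * `|b| = b * b by rewrite -normrM ger0_norm // -expr2 sqr_ge0.
nra.
Qed.

Lemma single_le (F : 'I_3 -> R) m : (forall k, 0 <= F k) -> F m <= \sum_(k < 3) F k.
Proof. by move=> F0; rewrite (bigD1 m) //= lerDl sumr_ge0. Qed.

Lemma prod_le (y : 'I_3 -> R) k m : `|y k| * `|y m| <= \sum_(j < 3) y j * y j.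
Proof.
have sq : forall j, `|y j| * `|y j| = y j * y j by move=> j; rewrite -normrM ger0_norm // -expr2 sqr_ge0.
have nn : forall j, 0 <= y j * y j by move=> j; rewrite -expr2 sqr_ge0.
have [h|h] := lerP `|y k| `|y m|.
  apply: (le_trans (ler_wpM2r (normr_ge0 _) h)); rewrite sq; exact: single_le.
apply: (le_trans (ler_wpM2l (normr_ge0 _) (ltW h))); rewrite sq; exact: single_le.
Qed.

Lemma bound (y : 'I_3 -> R) (B : 'I_3 -> 'I_3 -> R) :
  `|\sum_(k < 3) (y k * \sum_(m < 3) B k m * y m + y k * \sum_(m < 3) B k m * y m)|
   <= (\sum_(k < 3) \sum_(m < 3) 2 * (B k m * B k m + 1)) * \sum_(k < 3) y k * y k.
Proof.
have E : \sum_(k < 3) (y k * \sum_(m < 3) B k m * y m + y k * \sum_(m < 3) B k m * y m)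
   = \sum_(k < 3) \sum_(m < 3) 2 * (B k m * (y k * y m)).
  apply: eq_bigr => k _; rewrite mulr_sumr -big_split /=.
  by apply: eq_bigr => m _; ring.
rewrite E; apply: (le_trans (ler_norm_sum _ _ _)).
rewrite mulr_suml; apply: ler_sum => k _.
apply: (le_trans (ler_norm_sum _ _ _)).
rewrite mulr_suml; apply: ler_sum => m _.
rewrite normrM normrM normrM ger0_norm // -mulrA ler_wpM2l //.
apply: ler_pM; [exact: normr_ge0 | by rewrite mulr_ge0 | exact: abs_le_sq1 | exact: prod_le].
Qed.


End Helpers.

Lemma sumsq0 (R : realType) (y : 'I_3 -> R) : \sum_(k < 3) y k * y k = 0 -> forall k, y k = 0.
Proof.
move=> h k.
have := psumr_eq0P (P := predT) (F := fun k => y k * y k).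
move=> /(_ (fun i _ => ltac:(by rewrite -expr2 sqr_ge0)) h k isT) /eqP.
by rewrite mulf_eq0 orbb => /eqP.
Qed.

Theorem mainTheorem10 (R : realType) (P : 'rV[R]_3 -> 'M[R]_3)
  (H S : 'rV[R]_3 -> R) (I : set R) (x : R -> 'rV[R]_3) (x0 : 'rV[R]_3) :
  poisson_tensor P -> smooth H -> smooth S ->
  (forall y, tensor_apply (P y) (grad S y) = 0) ->
  open I -> is_interval I -> I 0 ->
  (forall t, I t -> is_derive t 1 x (metriplectic_field P H S (x t))) ->
  x 0 = x0 ->
  grad S x0 = 0 ->
  forall t, I t -> grad S (x t) = 0.
Proof.
move=> [smP skew _] hH hS hPS oI iI I0 hx x00 gS0 T IT.
have dS : forall z, differentiable S z := hS [::].
have dS1 : forall k z, differentiable (partial k S) z := fun k => hS [:: k].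
have dS2 : forall j k z, differentiable (partial j (partial k S)) z := fun j k => hS [:: j; k].
have dH1 : forall i z, differentiable (partial i H) z := fun i => hH [:: i].
have dP : forall i j z, differentiable (fun y => P y i j) z := fun i j => smP i j [::].
have dP1 : forall k i j z, differentiable (partial k (fun y => P y i j)) z :=
  fun k i j => smP i j [:: k].
have sym : forall k j z, partial j (partial k S) z = partial k (partial j S) z.
  move=> k j z.
  exact: (@schwarz R S k j z dS (dS1 k) (dS1 j) (differentiable_continuous (dS2 j k z))
     (differentiable_continuous (dS2 k j z))).
have idt : forall k i z, \sum_(j < 3) (P z i j * partial k (partial j S) z
    + partial j S z * partial k (fun y => P y i j) z) = 0.
  move=> k i z.
  have Z : forall y, \sum_(j < 3) P y i j * partial j S y = 0.
    move=> y; have := congr1 (fun M : 'rV[R]_3 => M 0 i) (hPS y).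
    rewrite /tensor_apply !mxE /= => E; rewrite -[RHS]E; apply: eq_bigr => j _; by rewrite mxE.
  have F0 : (fun y => \sum_(j < 3) P y i j * partial j S y) = cst 0.
    by apply/funext => y; exact: Z y.
  have F1 : (fun y => \sum_(j < 3) P y i j * partial j S y)
     = \sum_(j < 3) ((fun y => P y i j) * partial j S).
    by rewrite fct_sumE.
  have : partial k (fun y => \sum_(j < 3) P y i j * partial j S y) z = 0.
    by rewrite F0 /partial derive_cst.
  rewrite F1 /partial derive_sum; last first.
    move=> j; apply: diff_derivable; exact: (differentiableM (dP i j z) (dS1 j z)).
  move=> E; rewrite -[RHS]E; apply: eq_bigr => j _.
  rewrite deriveM; [by rewrite addrC | exact: (diff_derivable (dP i j z)) | exact: (diff_derivable (dS1 j z))].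
have mf : forall z j, metriplectic_field P H S z 0 j =
    \sum_(i < 3) P z j i * partial i H z + \sum_(m < 3) gtensor H z j m * partial m S z.
  move=> z j; rewrite /metriplectic_field /tensor_apply !mxE.
  by congr (_ + _); apply: eq_bigr => i _; rewrite /grad mxE.
pose Bz k m z := \sum_(i < 3) partial i H z * partial k (fun y => P y i m) z
   + \sum_(j < 3) gtensor H z j m * partial j (partial k S) z.
have key : forall k z, \sum_(j < 3) metriplectic_field P H S z 0 j * partial j (partial k S) z
   = \sum_(m < 3) Bz k m z * partial m S z.
  move=> k z; under eq_bigr do rewrite mf.
  exact: (@alg R (P z) (fun i => partial i H z) (fun j => partial j S z)
    (fun j m => gtensor H z j m) (fun i m => partial k (fun y => P y i m) z)
    (fun j => partial j (partial k S) z) (fun j => partial k (partial j S) z)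
    (skew z) (fun j => sym k j z) (fun i => idt k i z)).
have dx : forall t, I t -> differentiable x t.
  by move=> t It; apply/derivable1_diffP; have [] := hx t It.
pose yf k := fun s => partial k S (x s).
have yd : forall k t, I t -> is_derive t 1 (yf k) (\sum_(m < 3) Bz k m (x t) * yf m t).
  move=> k t It.
  have := @chain R (partial k S) x t _ (hx t It) (dS1 k (x t)).
  by rewrite (@diff_coord R _ _ _ (dS1 k (x t))) key.
pose u : R -> R := \sum_(k < 3) (yf k * yf k).
have uE : forall t, u t = \sum_(k < 3) yf k t * yf k t.
  by move=> t; rewrite /u fct_sumE.
pose du t := \sum_(k < 3) (yf k t * (\sum_(m < 3) Bz k m (x t) * yf m t)
   + yf k t * (\sum_(m < 3) Bz k m (x t) * yf m t)).
have ud : forall t, I t -> is_derive t 1 u (du t).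
  move=> t It; rewrite /u /du; apply: is_derive_sum => k.
  by apply: is_deriveM; exact: yd.
have dBz : forall k m z, differentiable (Bz k m) z.
  move=> k m; rewrite /Bz; apply: dfD; apply: dfS => i; apply: dfM.
  - exact: dH1.
  - exact: dP1.
  - have -> : (fun z => gtensor H z i m) = (fun z => partial i H z * partial m H z
        + - ((i == m)%:R * \sum_(k0 < 3) partial k0 H z * partial k0 H z)).
      apply/funext => z; rewrite /gtensor /grad !mxE; congr (_ - (_ * _)).
      by apply: eq_bigr => k0 _; rewrite mxE expr2.
    apply: dfD; first by apply: dfM; exact: dH1.
    apply: dfN; apply: dfM; first exact: dfC.
    by apply: dfS => k0; apply: dfM; exact: dH1.
  - exact: dS2.
pose bs z := \sum_(k < 3) \sum_(m < 3) 2 * (Bz k m z * Bz k m z + 1).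
have dbs : forall z, differentiable bs z.
  apply: dfS => k; apply: dfS => m; apply: dfM; first exact: dfC.
  apply: dfD; last exact: dfC.
  by apply: dfM; exact: dBz.
have unn : forall s, 0 <= u s.
  by move=> s; rewrite uE; apply: sumr_ge0 => k _; rewrite -expr2 sqr_ge0.
have claim : forall a b, a <= b -> I a -> I b -> (u a = 0 -> u b = 0) /\ (u b = 0 -> u a = 0).
  move=> a b ab Ia Ib.
  have sub : forall s, a <= s <= b -> I s := fun s => iI a b Ia Ib s.
  have cont : {within `[a, b], continuous (bs \o x)}.
    apply: continuous_in_subspaceT => s; rewrite inE /= in_itv /= => sab.
    exact: differentiable_continuous (differentiable_comp (dx s (sub s sab)) (dbs (x s))).
  have [c cin cmax] := EVT_max ab cont.
  apply: (@gron R u du (bs (x c)) a b ab).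
  - by move=> s sab; exact: ud s (sub s sab).
  - move=> s sab; rewrite /du uE.
    apply: (le_trans (@bound R (fun k => yf k s) (fun k m => Bz k m (x s)))).
    apply: ler_wpM2r; first by rewrite -uE.
    by apply: cmax; rewrite in_itv /= sab.
  - by move=> s _.
have u0 : u 0 = 0.
  rewrite uE; apply: big1 => k _.
  have : yf k 0 = 0.
    have := congr1 (fun M : 'rV[R]_3 => M 0 k) gS0.
    by rewrite /grad !mxE /yf x00.
  by move=> ->; rewrite mul0r.
have uT : u T = 0.
  have [h|h] := lerP 0 T.
    exact: ((claim 0 T h I0 IT).1 u0).
  exact: ((claim T 0 (ltW h) IT I0).2 u0).
apply/rowP => k; rewrite /grad !mxE.
have := @sumsq0 R (fun k => yf k T); rewrite -uE => /(_ uT k).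
by [].
Qed.
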